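(* Let $R$ be a unital, non-associative ring, let $\sigma,\delta\colon R\to R$ be left $R$-additive maps, and consider the non-associative Ore extension $R[X;\sigma,\delta]$. Let $\alpha$ be a ring endomorphism of $R$ such that there exists $a\in R$ with $\alpha(a)=1$. Then the homogeneous extension of $\alpha$ to $R[X;\sigma,\delta]$ is a ring endomorphism if and only if $\alpha\circ\delta=\delta\circ\alpha$ and $\alpha\circ\sigma=\sigma\circ\alpha$.
   Context: ''Non-associative'' means not necessarily associative. $\mathbb{N}$ denotes the non-negative integers. A map $\beta\colon R\to R$ is left $R$-additive if $r\cdot\beta(s+t)=r\cdot(\beta(s)+\beta(t))$ for all $r,s,t\in R$. For $m\in\mathbb{N}$ and $0\le i\le m$, $\pi_i^m\colon R\to R$ denotes the sum of all $\binom{m}{i}$ compositions of $i$ copies of $\sigma$ and $m-i$ copies of $\delta$ in arbitrary order ($\pi_0^0=\mathrm{id}_R$), and $\pi_i^m:=0$ if $i<0$ or $i>m$. The non-associative Ore extension $R[X;\sigma,\delta]$ is the set of formal sums $\sum_{i\in\mathbb{N}}a_iX^i$ with $a_i\in R$, finitely many nonzero, with coefficientwise addition and the distributive multiplication determined by $aX^m\cdot bX^n=\sum_{i\in\mathbb{N}}(a\cdot\pi_i^m(b))X^{i+n}$. An additive map $\gamma\colon R\to R$ is extended homogeneously by $\gamma\left(\sum_i a_iX^i\right):=\sum_i\gamma(a_i)X^i$. *)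

(* Defs.v *)
From HB Require Import structures.
From mathcomp Require Import all_boot all_order all_algebra.
Set Implicit Arguments. Unset Strict Implicit. Unset Printing Implicit Defensive.
Import GRing.Theory.
Local Open Scope ring_scope.

Definition nonassoc_ring (R : zmodType) (mul : R -> R -> R) (one : R) : Prop :=
  [/\ (forall x y z, mul (x + y) z = mul x z + mul y z),
      (forall x y z, mul x (y + z) = mul x y + mul x z),
      (forall x, mul one x = x) &
      (forall x, mul x one = x)].

Definition left_additive (R : zmodType) (mul : R -> R -> R) (b : R -> R) : Prop :=
  forall r s t, mul r (b (s + t)) = mul r (b s + b t).

Definition ring_endo (R : zmodType) (mul : R -> R -> R) (f : R -> R) : Prop :=
  (forall x y, f (x + y) = f x + f y) /\ (forall x y, f (mul x y) = mul (f x) (f y)).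

(* pi_i^m: sum over all words of length m with i letters sigma (true) and
   m - i letters delta (false) of the corresponding composition.  The word
   [w1; ...; wm] gives f_{w1} o ... o f_{wm}.  Empty sum (= 0) when i > m. *)
Definition ore_pi (R : zmodType) (sigma delta : R -> R) (m i : nat) (x : R) : R :=
  \sum_(w : m.-tuple bool | count id w == i)
     (foldr (fun (b : bool) f => (if b then sigma else delta) \o f) id w) x.

(* Elements of R[X; sigma, delta] are represented by coefficient lists
   p = [:: a_0; a_1; ...] (p`_i = coefficient of X^i); two lists are equal as
   elements iff all coefficients agree (trailing zeros irrelevant). *)
Definition ore_eq (R : zmodType) (p q : seq R) : Prop := forall i, p`_i = q`_i.

Definition ore_add (R : zmodType) (p q : seq R) : seq R :=
  mkseq (fun i => p`_i + q`_i) (maxn (size p) (size q)).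

(* coefficient of X^l in p * q, where
   a X^m * b X^n = sum_k (a * pi_k^m(b)) X^(k+n) *)
Definition ore_mul_coef (R : zmodType) (mul : R -> R -> R) (sigma delta : R -> R)
    (p q : seq R) (l : nat) : R :=
  \sum_(i < size p) \sum_(j < size q) \sum_(k < i.+1 | (k + j)%N == l)
      mul p`_i (ore_pi sigma delta i k q`_j).

Definition ore_mul (R : zmodType) (mul : R -> R -> R) (sigma delta : R -> R)
    (p q : seq R) : seq R :=
  mkseq (ore_mul_coef mul sigma delta p q) (size p + size q).

Definition hom_ext (R : zmodType) (gamma : R -> R) (p : seq R) : seq R := map gamma p.

Definition ore_ring_endo (R : zmodType) (mul : R -> R -> R) (sigma delta : R -> R)
    (g : seq R -> seq R) : Prop :=
  (forall p q, ore_eq (g (ore_add p q)) (ore_add (g p) (g q))) /\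
  (forall p q, ore_eq (g (ore_mul mul sigma delta p q))
                      (ore_mul mul sigma delta (g p) (g q))).

(* Main.v *)
Require Import Defs.
From HB Require Import structures.
From mathcomp Require Import all_boot all_order all_algebra.
Import GRing.Theory.
Local Open Scope ring_scope.

Lemma pi1 (R : zmodType) (s d : R -> R) k x :
  ore_pi s d 1 k x = \sum_(b : bool | (b : nat) == k) (if b then s x else d x).
Proof.
rewrite /ore_pi (reindex (fun b : bool => [tuple b])) /=.
  by apply: eq_big => [b|b _] /=; case: b; rewrite ?addn0.
exists (fun w => thead w) => [b _|w _] /=; first by rewrite theadE.
rewrite [RHS]tuple_eta; apply: val_inj => /=. by case: w => [[|? []]].
Qed.
Lemma pi10 (R : zmodType) (s d : R -> R) x : ore_pi s d 1 0 x = d x.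
Proof. by rewrite pi1 big_mkcond big_bool /= add0r. Qed.
Lemma pi11 (R : zmodType) (s d : R -> R) x : ore_pi s d 1 1 x = s x.
Proof. by rewrite pi1 big_mkcond big_bool /= addr0. Qed.

Section S.
Variables (R : zmodType) (mul : R -> R -> R) (alpha : R -> R).
Hypothesis Hadd : forall x y, alpha (x + y) = alpha x + alpha y.

Lemma alpha0 : alpha 0 = 0.
Proof. have h := Hadd 0 0; rewrite addr0 in h.
by apply: (addrI (alpha 0)); rewrite -h addr0. Qed.

Lemma nth_hom (p : seq R) i : (map alpha p)`_i = alpha p`_i.
Proof.
case: (ltnP i (size p)) => H; first by rewrite (nth_map 0).
by rewrite !nth_default ?size_map // alpha0.
Qed.

Lemma alpha_sum (I : Type) (r : seq I) (P : pred I) (F : I -> R) :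
  alpha (\sum_(i <- r | P i) F i) = \sum_(i <- r | P i) alpha (F i).
Proof. exact: (big_morph alpha Hadd alpha0). Qed.

Variables (sigma delta : R -> R).
Hypothesis Hs : forall x, alpha (sigma x) = sigma (alpha x).
Hypothesis Hd : forall x, alpha (delta x) = delta (alpha x).

Lemma alpha_fold (s : seq bool) x :
  alpha (foldr (fun (b : bool) f => (if b then sigma else delta) \o f) id s x) =
  foldr (fun (b : bool) f => (if b then sigma else delta) \o f) id s (alpha x).
Proof. by elim: s => [|[] s IH] //=; rewrite ?Hs ?Hd IH. Qed.

Lemma alpha_pi m k x : alpha (ore_pi sigma delta m k x) = ore_pi sigma delta m k (alpha x).
Proof. rewrite /ore_pi alpha_sum; apply: eq_bigr => w _; exact: alpha_fold. Qed.
End S.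

Theorem mainTheorem2 (R : zmodType) (mul : R -> R -> R) (one : R)
    (HR : nonassoc_ring mul one) (sigma delta : R -> R)
    (Hsigma : left_additive mul sigma) (Hdelta : left_additive mul delta)
    (alpha : R -> R) (Halpha : ring_endo mul alpha)
    (Hone : exists a : R, alpha a = one) :
  ore_ring_endo mul sigma delta (hom_ext alpha) <->
  ((forall x, alpha (delta x) = delta (alpha x)) /\
   (forall x, alpha (sigma x) = sigma (alpha x))).
Proof.
case: HR => mulDl mulDr mul1x mulx1.
case: Halpha => Hadd Hmul.
have mul0 : forall x, mul 0 x = 0.
  move=> x; have h := mulDl 0 0 x; rewrite addr0 in h.
  by apply: (addrI (mul 0 x)); rewrite -h addr0.
have a1 : alpha one = one.
  by case: Hone => a Ha; rewrite -[alpha one]mulx1 -{2}Ha -Hmul mul1x.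
split.
- move=> [_ Hm].
  have key : forall b l, ore_mul_coef mul sigma delta [:: 0; one] [:: b] l =
      if l == 0%N then delta b else if l == 1%N then sigma b else 0.
    move=> b l; rewrite /ore_mul_coef /=.
    rewrite !big_ord_recl !big_ord0 /= big1 ?add0r ?addr0; last by move=> *; rewrite mul0.
    rewrite big_mkcond !big_ord_recl big_ord0 /= !mul1x pi10 pi11.
    by case: l => [|[|l]] /=; rewrite ?addr0 ?add0r.
  have co : forall x l, (l < 3)%N -> alpha (ore_mul_coef mul sigma delta [:: 0; one] [:: x] l) =
       ore_mul_coef mul sigma delta [:: 0; one] [:: alpha x] l.
    move=> x l hl; have := Hm [:: 0; one] [:: x] l.
    rewrite /hom_ext /ore_mul /= alpha0 // a1.
    by case: l hl => [|[|[|]]].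
  split => x.
    by have := co x 0%N isT; rewrite !key.
  by have := co x 1%N isT; rewrite !key.
- move=> [Hd Hs]; split.
  + move=> p q i; rewrite /hom_ext /ore_add !size_map nth_hom //.
    case: (ltnP i (maxn (size p) (size q))) => H.
      by rewrite !nth_mkseq // Hadd !nth_hom.
    by rewrite !nth_default ?size_mkseq // alpha0.
  + move=> p q i; rewrite /hom_ext /ore_mul !size_map nth_hom //.
    case: (ltnP i (size p + size q)) => H; last first.
      by rewrite !nth_default ?size_mkseq // alpha0.
    rewrite !nth_mkseq // /ore_mul_coef !size_map alpha_sum //.
    apply: eq_bigr => a _; rewrite alpha_sum //; apply: eq_bigr => b _.
    rewrite alpha_sum //; apply: eq_bigr => c _.
    by rewrite Hmul alpha_pi // !nth_hom.
Qed.
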